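(* Let $\beta\in[1,2]$ and let $f\in C[0,1]$ satisfy $f(x)\neq0$ for all $x\in[0,1]$. Then there exist $g,h\in C[0,1]$ such that $$f=g\cdot h\quad\text{and}\quad \overline{\dim}_B G(g)=\overline{\dim}_B G(h)=\beta$$ if and only if $\overline{\dim}_B G(f)\le\beta$.
   Context: $C[0,1]$ is the space of real-valued continuous functions on $[0,1]$; $G(h)=\{(x,h(x)):x\in[0,1]\}\subset\mathbb{R}^2$ is the graph of $h$; $g\cdot h$ is the pointwise product. For a nonempty bounded set $F$, $N_\delta(F)$ is the smallest number of sets of diameter at most $\delta$ covering $F$, and $\overline{\dim}_B F=\limsup_{\delta\to0}\frac{\log N_\delta(F)}{-\log\delta}$. *)

(* Defs.v *)
From Stdlib Require Import Reals.
From Coquelicot Require Import Coquelicot.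
Open Scope R_scope.

Definition dist2 (p q : R * R) : R :=
  sqrt ((fst p - fst q) ^ 2 + (snd p - snd q) ^ 2).

Definition diam_le (S : R * R -> Prop) (d : R) : Prop :=
  forall p q, S p -> S q -> dist2 p q <= d.

Definition covers_by (F : R * R -> Prop) (d : R) (n : nat) : Prop :=
  exists U : nat -> (R * R -> Prop),
    (forall i, (i < n)%nat -> diam_le (U i) d) /\
    (forall p, F p -> exists i, (i < n)%nat /\ U i p).

(* N_d(F): smallest number of sets of diameter at most d covering F
   (p_infty if no finite cover exists) *)
Definition Ncover (F : R * R -> Prop) (d : R) : Rbar :=
  Rbar_glb (fun x => exists n, covers_by F d n /\ x = Finite (INR n)).

Definition box_ratio (F : R * R -> Prop) (d : R) : Rbar :=
  match Ncover F d with
  | Finite r => Finite (ln r / - ln d)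
  | _ => p_infty
  end.

(* upper box dimension: limsup_{d -> 0+} log N_d(F) / (- log d)
   = inf_{e > 0} sup_{0 < d < e} ratio *)
Definition upper_box_dim (F : R * R -> Prop) : Rbar :=
  Rbar_glb (fun y => exists e, 0 < e /\
     y = Rbar_lub (fun z => exists d, 0 < d < e /\ z = box_ratio F d)).

Definition graph (h : R -> R) : R * R -> Prop :=
  fun p => 0 <= fst p <= 1 /\ snd p = h (fst p).

Definition cont01 (h : R -> R) : Prop :=
  forall x, 0 <= x <= 1 -> forall eps, 0 < eps -> exists del, 0 < del /\
    forall y, 0 <= y <= 1 -> Rabs (y - x) < del -> Rabs (h y - h x) < eps.

(* Main.v *)
Require Import Defs.
From Stdlib Require Import Reals Lra Lia Classical ClassicalDescription ZArith.
From Coquelicot Require Import Coquelicot.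
Open Scope R_scope.


Definition ind (P : Prop) : nat := if excluded_middle_informative P then 1%nat else 0%nat.
Fixpoint nsum (f : nat -> nat) (n : nat) : nat :=
  match n with O => O | S n => (nsum f n + f n)%nat end.
Definition count (N : nat) (P : nat -> Prop) : nat := nsum (fun i => ind (P i)) N.

Lemma ind_T (P : Prop) : P -> ind P = 1%nat.
Proof. unfold ind; destruct excluded_middle_informative; tauto. Qed.
Lemma ind_F (P : Prop) : ~ P -> ind P = 0%nat.
Proof. unfold ind; destruct excluded_middle_informative; tauto. Qed.
Lemma ind_le1 P : (ind P <= 1)%nat.
Proof. unfold ind; destruct excluded_middle_informative; lia. Qed.

Lemma nsum_le f g n : (forall j, (j < n)%nat -> (f j <= g j)%nat) -> (nsum f n <= nsum g n)%nat.
Proof. induction n; simpl; intros H; [lia|]. specialize (IHn (fun j Hj => H j ltac:(lia))). specialize (H n ltac:(lia)). lia. Qed.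

Lemma nsum_ext f g n : (forall j, (j < n)%nat -> f j = g j) -> nsum f n = nsum g n.
Proof. induction n; simpl; intros H; [lia|]. rewrite IHn by (intros; apply H; lia). rewrite H; lia. Qed.

Lemma nsum_add f g n : nsum (fun j => f j + g j)%nat n = (nsum f n + nsum g n)%nat.
Proof. induction n; simpl; lia. Qed.

Lemma nsum_swap (a : nat -> nat -> nat) n N :
  nsum (fun j => nsum (fun i => a i j) N) n = nsum (fun i => nsum (fun j => a i j) n) N.
Proof.
  induction n; simpl.
  - induction N; simpl; lia.
  - rewrite IHn. rewrite <- nsum_add. apply nsum_ext. intros; simpl; lia.
Qed.

Lemma nsum_lin (f g : nat -> nat) a b c n :
  nsum (fun j => a * f j + b * g j + c)%nat n = (a * nsum f n + b * nsum g n + c * n)%nat.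
Proof. induction n; simpl; [lia|]. rewrite IHn. ring. Qed.

Lemma nsum_const c n : nsum (fun _ => c) n = (c * n)%nat.
Proof. induction n; simpl; lia. Qed.

Lemma count_pos N P i : (i < N)%nat -> P i -> (1 <= count N P)%nat.
Proof.
  unfold count; induction N; simpl; intros Hi HP; [lia|].
  destruct (Nat.eq_dec i N).
  - subst. rewrite ind_T; auto. lia.
  - specialize (IHN ltac:(lia) HP). lia.
Qed.

Lemma count_remove N P i0 : P i0 ->
  count N P = (count N (fun i => P i /\ i <> i0) + (if Nat.ltb i0 N then 1 else 0))%nat.
Proof.
  unfold count; intros H0; induction N; simpl; [reflexivity|].
  rewrite IHN. destruct (Nat.eq_dec N i0).
  - subst. rewrite ind_T by auto. rewrite ind_F by tauto.
    replace (Nat.ltb i0 i0) with false by (symmetry; apply Nat.ltb_ge; lia).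
    replace (Nat.ltb i0 (S i0)) with true by (symmetry; apply Nat.ltb_lt; lia). lia.
  - replace (ind (P N /\ N <> i0)) with (ind (P N)).
    2:{ unfold ind. destruct excluded_middle_informative, excluded_middle_informative; tauto. }
    destruct (Nat.ltb_spec i0 N), (Nat.ltb_spec i0 (S N)); lia.
Qed.

Lemma count_window N P k : (forall j, P j -> (k <= j <= k + 4)%nat) -> (count N P <= 5)%nat.
Proof.
  intros H. assert (forall n, (count n P <= Nat.min 5 (n - k))%nat); [|specialize (H0 N); lia].
  unfold count; induction n; cbn [nsum]; [lia|].
  destruct (classic (P n)) as [Hp|Hp].
  - rewrite ind_T by auto. specialize (H n Hp). lia.
  - rewrite ind_F by auto. lia.
Qed.

Lemma count_le N P : (count N P <= N)%nat.
Proof. unfold count; induction N; simpl; [lia|]. pose proof (ind_le1 (P N)); lia. Qed.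

Lemma covers_mono F d d' c : d <= d' -> covers_by F d c -> covers_by F d' c.
Proof.
  intros Hd [U [HU1 HU2]]. exists U; split; auto.
  intros i Hi p q Hp Hq. specialize (HU1 i Hi p q Hp Hq). lra.
Qed.

Lemma covers_sub F G d c : (forall p, F p -> G p) -> covers_by G d c -> covers_by F d c.
Proof. intros H [U [H1 H2]]. exists U; split; auto. Qed.

Lemma covers_union F1 F2 d a b : covers_by F1 d a -> covers_by F2 d b ->
  covers_by (fun p => F1 p \/ F2 p) d (a + b).
Proof.
  intros [U1 [A1 B1]] [U2 [A2 B2]].
  exists (fun i => if Nat.ltb i a then U1 i else U2 (i - a)%nat). split.
  - intros i Hi. destruct (Nat.ltb_spec i a).
    + apply A1; auto.
    + apply A2; lia.
  - intros p [Hp|Hp].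
    + destruct (B1 p Hp) as [i [Hi Ui]]. exists i. split; [lia|].
      destruct (Nat.ltb_spec i a); [auto|lia].
    + destruct (B2 p Hp) as [i [Hi Ui]]. exists (a + i)%nat. split; [lia|].
      destruct (Nat.ltb_spec (a+i) a); [lia|]. replace (a + i - a)%nat with i by lia. auto.
Qed.

Lemma covers_family F d n (Fj : nat -> R * R -> Prop) (k : nat -> nat) :
  (forall j, (j < n)%nat -> covers_by (Fj j) d (k j)) ->
  (forall p, F p -> exists j, (j < n)%nat /\ Fj j p) ->
  covers_by F d (nsum k n).
Proof.
  revert F. induction n; intros F Hc Hu; simpl.
  - exists (fun _ _ => False). split; [intros; lia|].
    intros p Fp. destruct (Hu p Fp) as [j [Hj _]]; lia.
  - apply covers_sub with (G := fun p => (exists j, (j < n)%nat /\ Fj j p) \/ Fj n p).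
    + intros p Fp. destruct (Hu p Fp) as [j [Hj Hp]].
      destruct (Nat.eq_dec j n); [subst; right; auto|left; exists j; split; [lia|auto]].
    + apply covers_union.
      * apply IHn; [intros; apply Hc; lia| auto].
      * apply Hc; lia.
Qed.

Lemma nat_floor k t : (1 <= k)%nat -> 0 <= t <= INR k ->
  exists i, (i < k)%nat /\ INR i <= t <= INR i + 1.
Proof.
  intros Hk. induction k; [lia|]. intros Ht.
  destruct (Nat.eq_dec k 0).
  - subst. exists 0%nat. simpl in *. split; [lia|lra].
  - destruct (Rle_dec t (INR k)).
    + destruct IHk as [i [Hi Hi2]]; [lia| split; lra |]. exists i; split; [lia|auto].
    + exists k. rewrite S_INR in Ht. split; [lia|lra].
Qed.

Lemma dist2_le p q w : 0 <= w -> Rabs (fst p - fst q) <= w -> Rabs (snd p - snd q) <= w ->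
  dist2 p q <= sqrt 2 * w.
Proof.
  intros Hw H1 H2. unfold dist2. rewrite <- (sqrt_pow2 w Hw). rewrite <- sqrt_mult_alt by lra.
  apply sqrt_le_1_alt.
  assert ((fst p - fst q)^2 <= w^2). { rewrite <- (pow2_abs (fst p - fst q)). apply pow_incr. split; [apply Rabs_pos|auto]. }
  assert ((snd p - snd q)^2 <= w^2). { rewrite <- (pow2_abs (snd p - snd q)). apply pow_incr. split; [apply Rabs_pos|auto]. }
  lra.
Qed.

Lemma dist2_snd p q : Rabs (snd p - snd q) <= dist2 p q.
Proof.
  unfold dist2. rewrite <- sqrt_Rsqr_abs. apply sqrt_le_1_alt. unfold Rsqr. 
  pose proof (pow2_ge_0 (fst p - fst q)). simpl in *. lra.
Qed.

Lemma dist2_fst p q : Rabs (fst p - fst q) <= dist2 p q.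
Proof.
  unfold dist2. rewrite <- sqrt_Rsqr_abs. apply sqrt_le_1_alt. unfold Rsqr. 
  pose proof (pow2_ge_0 (snd p - snd q)). simpl in *. lra.
Qed.

Lemma column_cover a w lo k : 0 < w ->
  covers_by (fun p => a <= fst p <= a + w /\ lo <= snd p <= lo + INR k * w) (sqrt 2 * w) (S k).
Proof.
  intros Hw.
  exists (fun i p => a <= fst p <= a + w /\ lo + INR i * w <= snd p <= lo + (INR i + 1) * w).
  split.
  - intros i Hi p q [Hp1 Hp2] [Hq1 Hq2]. apply dist2_le; [lra| |]; apply Rabs_le; lra.
  - intros p [Hp1 Hp2]. destruct (nat_floor (S k) ((snd p - lo) / w)) as [i [Hi Hi2]]; [lia| |].
    + split. apply Rmult_le_pos; [lra| left; apply Rinv_0_lt_compat; lra].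
      rewrite S_INR. apply Rmult_le_reg_r with w; auto. unfold Rdiv; rewrite Rmult_assoc, Rinv_l by lra. nra.
    + exists i; split; auto. split; auto.
      destruct Hi2 as [A B].
      apply Rmult_le_compat_r with (r := w) in A; [|lra].
      apply Rmult_le_compat_r with (r := w) in B; [|lra].
      unfold Rdiv in A, B. rewrite Rmult_assoc, Rinv_l in A, B by lra. lra.
Qed.


Lemma interval_cover N (V : nat -> R -> Prop) (delta : R) :
  0 <= delta -> (forall i y y', V i y -> V i y' -> Rabs (y - y') <= delta) ->
  forall m P a b, count N P = m ->
  (forall y, a <= y <= b -> exists i, (i < N)%nat /\ P i /\ V i y) ->
  b - a <= INR m * delta.
Proof.
  intros Hd HV. induction m; intros P a b Hc Hcov.
  - simpl. destruct (Rle_dec a b); [|lra].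
    destruct (Hcov a ltac:(lra)) as [i [Hi [Pi _]]].
    pose proof (count_pos N P i Hi Pi). lia.
  - destruct (Rle_dec (b - a) delta).
    { rewrite S_INR. pose proof (pos_INR m). nra. }
    destruct (Hcov b ltac:(lra)) as [i0 [Hi0 [Pi0 Vi0]]].
    pose proof (count_remove N P i0 Pi0) as Hr.
    replace (Nat.ltb i0 N) with true in Hr by (symmetry; apply Nat.ltb_lt; auto).
    assert (Hc' : count N (fun i => P i /\ i <> i0) = m) by lia.
    assert (forall eps, 0 < eps -> (b - delta - eps) - a <= INR m * delta).
    { intros eps He. apply (IHm _ a (b - delta - eps) Hc').
      intros y Hy. destruct (Hcov y ltac:(lra)) as [i [Hi [Pi Vi]]].
      exists i. repeat split; auto. intros ->. specialize (HV i0 y b Vi Vi0).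
      apply Rabs_le_between in HV. lra. }
    rewrite S_INR. destruct (Rle_dec (b - a) ((INR m + 1) * delta)); auto.
    specialize (H ((b - a - (INR m + 1) * delta) / 2) ltac:(lra)). lra.
Qed.

Lemma glb_correct E : Rbar_is_glb E (Rbar_glb E).
Proof. unfold Rbar_glb; destruct (Rbar_ex_glb E); auto. Qed.
Lemma lub_correct E : Rbar_is_lub E (Rbar_lub E).
Proof. unfold Rbar_lub; destruct (Rbar_ex_lub E); auto. Qed.

Lemma nat_min (P : nat -> Prop) m : P m -> exists k, P k /\ forall n, P n -> (k <= n)%nat.
Proof.
  revert m. induction m as [m IH] using (well_founded_induction lt_wf). intros Pm.
  destruct (classic (exists n, (n < m)%nat /\ P n)) as [[n [Hn Pn]]|Hno].
  - exact (IH n Hn Pn).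
  - exists m; split; auto. intros n Pn. destruct (le_lt_dec m n); auto. exfalso; eauto.
Qed.

Lemma Ncover_spec F d m : covers_by F d m ->
  exists k, covers_by F d k /\ Ncover F d = Finite (INR k) /\ forall n, covers_by F d n -> (k <= n)%nat.
Proof.
  intros Hm. destruct (nat_min (covers_by F d) m Hm) as [k [Hk Hmin]].
  exists k; repeat split; auto.
  unfold Ncover. apply Rbar_is_glb_unique. split.
  - intros x [n [Hn ->]]. simpl. apply le_INR; auto.
  - intros b Hb. apply Hb. exists k; auto.
Qed.

Lemma Ncover_none F d : (forall n, ~ covers_by F d n) -> Ncover F d = p_infty.
Proof.
  intros H. unfold Ncover. apply Rbar_is_glb_unique. split.
  - intros x [n [Hn _]]. exfalso; eapply H; eauto.
  - intros b _. destruct b; simpl; auto.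
Qed.

Lemma ln_0 : ln 0 = 0.
Proof. unfold ln. case Rlt_dec; intros r. exfalso; exact (Rlt_irrefl 0 r). reflexivity. Qed.

Lemma ln_INR_nonneg k : 0 <= ln (INR k).
Proof.
  destruct k. change (INR 0) with 0. rewrite ln_0; lra.
  rewrite <- ln_1. apply ln_le; [lra|]. rewrite S_INR; pose proof (pos_INR k); lra.
Qed.

Definition dimF F := upper_box_dim F.

Lemma Rbar_le_eps (x : Rbar) D : (forall eps, 0 < eps -> Rbar_le x (Finite (D + eps))) -> Rbar_le x (Finite D).
Proof.
  intros H. destruct x as [r| |]; simpl.
  - destruct (Rle_dec r D); auto. specialize (H ((r - D)/2) ltac:(lra)). simpl in H. lra.
  - specialize (H 1 ltac:(lra)). simpl in H; auto.
  - auto.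
Qed.

Lemma dim_le F D :
  (forall eps, 0 < eps -> exists e, 0 < e /\ forall d, 0 < d < e -> Rbar_le (box_ratio F d) (Finite (D + eps))) ->
  Rbar_le (upper_box_dim F) (Finite D).
Proof.
  intros H. apply Rbar_le_eps. intros eps He. destruct (H eps He) as [e [He0 Hd]].
  unfold upper_box_dim. destruct (glb_correct (fun y => exists e, 0 < e /\
     y = Rbar_lub (fun z => exists d, 0 < d < e /\ z = box_ratio F d))) as [Hlb _].
  eapply Rbar_le_trans. apply Hlb. exists e; split; eauto.
  destruct (lub_correct (fun z => exists d, 0 < d < e /\ z = box_ratio F d)) as [_ Hl].
  apply Hl. intros z [d [Hd' ->]]. apply Hd; auto.
Qed.

Lemma dim_le_inv F D : Rbar_le (upper_box_dim F) (Finite D) ->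
  forall eps, 0 < eps -> exists e, 0 < e /\ forall d, 0 < d < e -> Rbar_le (box_ratio F d) (Finite (D + eps)).
Proof.
  intros H eps He. apply NNPP. intros Hn.
  assert (Hall : forall e, 0 < e -> exists d, 0 < d < e /\ Rbar_lt (Finite (D + eps)) (box_ratio F d)).
  { intros e He0. apply NNPP. intros Hn2. apply Hn. exists e; split; auto.
    intros d Hd. apply Rbar_not_lt_le. intros Hlt. apply Hn2. exists d; auto. }
  unfold upper_box_dim in H.
  destruct (glb_correct (fun y => exists e, 0 < e /\
     y = Rbar_lub (fun z => exists d, 0 < d < e /\ z = box_ratio F d))) as [_ Hg].
  assert (Hlow : Rbar_le (Finite (D + eps)) (Rbar_glb (fun y => exists e, 0 < e /\
     y = Rbar_lub (fun z => exists d, 0 < d < e /\ z = box_ratio F d)))).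
  { apply Hg. intros y [e [He0 ->]]. destruct (Hall e He0) as [d [Hd Hlt]].
    destruct (lub_correct (fun z => exists d, 0 < d < e /\ z = box_ratio F d)) as [Hu _].
    eapply Rbar_le_trans; [apply Rbar_lt_le; apply Hlt|]. apply Hu. exists d; auto. }
  pose proof (Rbar_le_trans _ _ _ Hlow H). simpl in H0. lra.
Qed.

Lemma dim_ge F D :
  (forall eps e, 0 < eps -> 0 < e -> exists d, 0 < d < e /\ Rbar_le (Finite (D - eps)) (box_ratio F d)) ->
  Rbar_le (Finite D) (upper_box_dim F).
Proof.
  intros H. unfold upper_box_dim.
  destruct (glb_correct (fun y => exists e, 0 < e /\
     y = Rbar_lub (fun z => exists d, 0 < d < e /\ z = box_ratio F d))) as [_ Hg].
  apply Hg. intros y [e [He ->]].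
  destruct (lub_correct (fun z => exists d, 0 < d < e /\ z = box_ratio F d)) as [Hu _].
  set (L := Rbar_lub _) in *.
  assert (forall eps, 0 < eps -> Rbar_le (Finite (D - eps)) L).
  { intros eps Heps. destruct (H eps e Heps He) as [d [Hd Hr]]. eapply Rbar_le_trans; [apply Hr|].
    apply Hu. exists d; auto. }
  destruct L as [r| |]; simpl; auto.
  - destruct (Rle_dec D r); auto. specialize (H0 ((D - r)/2) ltac:(lra)). simpl in H0. lra.
  - specialize (H0 1 ltac:(lra)). simpl in H0. auto.
Qed.

Lemma dim_ge2 F D :
  (forall eps e, 0 < eps -> 0 < e -> exists d, 0 < d < e /\ d < 1 /\
     forall c, covers_by F d c -> (D - eps) * (- ln d) <= ln (INR c)) ->
  Rbar_le (Finite D) (upper_box_dim F).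
Proof.
  intros H. apply dim_ge. intros eps e He He0. destruct (H eps e He He0) as [d [Hd [Hd1 Hc]]].
  exists d; split; auto. unfold box_ratio.
  destruct (classic (exists m, covers_by F d m)) as [[m Hm]|Hno].
  - destruct (Ncover_spec F d m Hm) as [k [Hk [-> _]]]. simpl.
    assert (Hl1 : ln d < ln 1) by (apply ln_increasing; lra). rewrite ln_1 in Hl1.
    specialize (Hc k Hk). apply Rmult_le_reg_r with (- ln d); [lra|].
    unfold Rdiv. rewrite Rmult_assoc, Rinv_l by lra. lra.
  - rewrite Ncover_none. simpl; auto. intros n Hn; apply Hno; eauto.
Qed.


Definition clamp (x : R) : R := Rmax 0 (Rmin 1 x).
Lemma clamp_id x : 0 <= x <= 1 -> clamp x = x.
Proof. intros. unfold clamp, Rmax, Rmin. repeat destruct Rle_dec; lra. Qed.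
Lemma clamp_in x : 0 <= clamp x <= 1.
Proof. unfold clamp, Rmax, Rmin. repeat destruct Rle_dec; lra. Qed.
Lemma clamp_lip x y : Rabs (clamp x - clamp y) <= Rabs (x - y).
Proof. unfold clamp, Rmax, Rmin. repeat destruct Rle_dec; unfold Rabs; repeat destruct Rcase_abs; lra. Qed.

Lemma cont_clamp g : cont01 g -> continuity (fun x => g (clamp x)).
Proof.
  intros Hg x. unfold continuity_pt, continue_in, limit1_in, limit_in. simpl. unfold R_dist.
  intros eps He. destruct (Hg (clamp x) (clamp_in x) eps He) as [del [Hd H]].
  exists del; split; auto. intros y [_ Hy]. apply H. apply clamp_in.
  eapply Rle_lt_trans; [apply clamp_lip|auto].
Qed.

Lemma cont01_bounded g : cont01 g -> exists M, 0 <= M /\ forall x, 0 <= x <= 1 -> Rabs (g x) <= M.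
Proof.
  intros Hg. pose proof (cont_clamp g Hg) as Hc.
  destruct (continuity_ab_maj (fun x => Rabs (g (clamp x))) 0 1 ltac:(lra)) as [Mx [HM _]].
  { intros c _. change (continuity_pt (comp Rabs (fun x => g (clamp x))) c). apply continuity_pt_comp; [apply Hc| apply Rcontinuity_abs]. }
  exists (Rabs (g (clamp Mx))). split; [apply Rabs_pos|].
  intros x Hx. specialize (HM x Hx). simpl in HM. rewrite clamp_id in HM; auto.
Qed.

Lemma cont01_min g : cont01 g -> (forall x, 0 <= x <= 1 -> g x <> 0) ->
  exists m, 0 < m /\ forall x, 0 <= x <= 1 -> m <= Rabs (g x).
Proof.
  intros Hg Hnz. pose proof (cont_clamp g Hg) as Hc.
  destruct (continuity_ab_min (fun x => Rabs (g (clamp x))) 0 1 ltac:(lra)) as [mx [HM Hmx]].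
  { intros c _. change (continuity_pt (comp Rabs (fun x => g (clamp x))) c). apply continuity_pt_comp; [apply Hc| apply Rcontinuity_abs]. }
  exists (Rabs (g (clamp mx))). split.
  - apply Rabs_pos_lt. apply Hnz. apply clamp_in.
  - intros x Hx. specialize (HM x Hx). simpl in HM. rewrite (clamp_id x) in HM; auto.
Qed.

Lemma cont01_ivt g x1 x2 y : cont01 g -> 0 <= x1 <= 1 -> 0 <= x2 <= 1 ->
  Rmin (g x1) (g x2) <= y <= Rmax (g x1) (g x2) ->
  exists x, Rmin x1 x2 <= x <= Rmax x1 x2 /\ g x = y.
Proof.
  intros Hg H1 H2 Hy. pose proof (cont_clamp g Hg) as Hc.
  destruct (IVT_gen (fun x => g (clamp x)) x1 x2 y Hc) as [x [Hx Hgx]].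
  { rewrite !clamp_id; auto. }
  exists x. assert (0 <= x <= 1).
  { unfold Rmin, Rmax in Hx. destruct Rle_dec; lra. }
  rewrite clamp_id in Hgx; auto.
Qed.

Lemma lip_cont (u g1 g2 : R -> R) C : 0 <= C -> cont01 g1 -> cont01 g2 ->
  (forall x y, 0 <= x <= 1 -> 0 <= y <= 1 -> Rabs (u x - u y) <= C * (Rabs (g1 x - g1 y) + Rabs (g2 x - g2 y))) ->
  cont01 u.
Proof.
  intros HC H1 H2 Hu x Hx eps He.
  destruct (H1 x Hx (eps / (4 * (C + 1)))) as [d1 [Hd1 K1]].
  { apply Rdiv_lt_0_compat; lra. }
  destruct (H2 x Hx (eps / (4 * (C + 1)))) as [d2 [Hd2 K2]].
  { apply Rdiv_lt_0_compat; lra. }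
  exists (Rmin d1 d2). split; [apply Rmin_pos; auto|].
  intros y Hy Hyx. specialize (K1 y Hy ltac:(eapply Rlt_le_trans; [eauto|apply Rmin_l])).
  specialize (K2 y Hy ltac:(eapply Rlt_le_trans; [eauto|apply Rmin_r])).
  specialize (Hu y x Hy Hx).
  assert (C * (Rabs (g1 y - g1 x) + Rabs (g2 y - g2 x)) <= (C+1) * (2 * (eps / (4 * (C + 1))))).
  { apply Rmult_le_compat; try lra. apply Rplus_le_le_0_compat; apply Rabs_pos. }
  replace ((C+1) * (2 * (eps / (4 * (C + 1))))) with (eps/2) in H by (field; lra). lra.
Qed.


Lemma nat_above X : exists n : nat, X < INR n /\ INR n <= Rmax 0 X + 1.
Proof.
  destruct (archimed X) as [H1 H2].
  destruct (Z_le_gt_dec (up X) 0).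
  - exists 0%nat. simpl. apply IZR_le in l. unfold Rmax; destruct Rle_dec; lra.
  - exists (Z.to_nat (up X)). rewrite INR_IZR_INZ, Z2Nat.id by lia. unfold Rmax; destruct Rle_dec; lra.
Qed.

Definition col (n j : nat) (x : R) : Prop := INR j <= x * INR n <= INR j + 1.
Definition meets (g : R -> R) (n : nat) (U : nat -> R * R -> Prop) (i j : nat) : Prop :=
  exists x, col n j x /\ 0 <= x <= 1 /\ U i (x, g x).

Lemma col_in n j x : (1 <= n)%nat -> (j < n)%nat -> col n j x -> 0 <= x <= 1.
Proof.
  intros Hn Hj [A B]. assert (1 <= INR n) by (apply (le_INR 1); lia).
  assert (INR j + 1 <= INR n) by (rewrite <- S_INR; apply le_INR; lia).
  pose proof (pos_INR j). split; nra.
Qed.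

Lemma column_counts g n N U : (1 <= n)%nat -> cont01 g ->
  (forall i, (i < N)%nat -> diam_le (U i) (/ INR n)) ->
  (forall p, graph g p -> exists i, (i < N)%nat /\ U i p) ->
  (nsum (fun j => count N (fun i => meets g n U i j)) n <= 5 * N)%nat /\
  (n <= nsum (fun j => count N (fun i => meets g n U i j)) n)%nat /\
  forall j x y, (j < n)%nat -> col n j x -> col n j y ->
     Rabs (g x - g y) <= INR (count N (fun i => meets g n U i j)) / INR n.
Proof.
  intros Hn Hg Hdiam Hcov.
  assert (Hn1 : 1 <= INR n) by (apply (le_INR 1); lia).
  split; [|split].
  - unfold count. rewrite nsum_swap.
    apply Nat.le_trans with (nsum (fun _ => 5%nat) N); [|rewrite nsum_const; lia].
    apply nsum_le. intros i Hi. fold (count n (fun j => meets g n U i j)).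
    destruct (classic (exists j0, meets g n U i j0)) as [[j0 [x0 [C0 [X0 U0]]]]|Hno].
    + apply (count_window n _ (j0 - 2)). intros j [x [C [X Ux]]].
      specialize (Hdiam i Hi _ _ Ux U0). pose proof (Rle_trans _ _ _ (dist2_fst _ _) Hdiam) as D.
      simpl in D. apply Rabs_le_between in D. destruct C as [C1 C2]; destruct C0 as [C01 C02].
      assert (E1 : x * INR n <= x0 * INR n + 1).
      { assert (x <= x0 + / INR n) by lra. apply Rmult_le_compat_r with (r := INR n) in H; [|lra].
        rewrite Rmult_plus_distr_r, Rinv_l in H by lra. lra. }
      assert (E2 : x0 * INR n <= x * INR n + 1).
      { assert (x0 <= x + / INR n) by lra. apply Rmult_le_compat_r with (r := INR n) in H; [|lra].
        rewrite Rmult_plus_distr_r, Rinv_l in H by lra. lra. }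
      assert (INR j < INR (j0 + 3)) by (rewrite plus_INR; simpl; lra).
      assert (INR j0 < INR (j + 3)) by (rewrite plus_INR; simpl; lra).
      apply INR_lt in H, H0. lia.
    + apply (count_window n _ 0). intros j Hj. exfalso; eauto.
  - apply Nat.le_trans with (nsum (fun _ => 1%nat) n); [rewrite nsum_const; lia|].
    apply nsum_le. intros j Hj.
    assert (Hx : 0 <= INR j / INR n <= 1).
    { split. apply Rmult_le_pos; [apply pos_INR| left; apply Rinv_0_lt_compat; lra].
      apply Rmult_le_reg_r with (INR n); [lra|]. unfold Rdiv; rewrite Rmult_assoc, Rinv_l by lra.
      rewrite Rmult_1_r, Rmult_1_l. apply le_INR; lia. }
    destruct (Hcov (INR j / INR n, g (INR j / INR n))) as [i [Hi Ui]].
    { split; simpl; auto. }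
    apply (count_pos N _ i Hi). exists (INR j / INR n). split; [|split; auto].
    unfold col. unfold Rdiv; rewrite Rmult_assoc, Rinv_l by lra. lra.
  - intros j x y Hj Cx Cy.
    pose proof (col_in n j x Hn Hj Cx) as Ix. pose proof (col_in n j y Hn Hj Cy) as Iy.
    pose (V := fun i z => (i < N)%nat /\ exists w, col n j w /\ 0 <= w <= 1 /\ U i (w, g w) /\ z = g w).
    assert (Hint := interval_cover N V (/ INR n) ltac:(left; apply Rinv_0_lt_compat; lra)).
    assert (HV : forall i y y', V i y -> V i y' -> Rabs (y - y') <= / INR n).
    { intros i z z' [Hi [w [_ [_ [Uw ->]]]]] [_ [w' [_ [_ [Uw' ->]]]]].
      specialize (Hdiam i Hi _ _ Uw Uw'). pose proof (dist2_snd (w, g w) (w', g w')). simpl in *. lra. }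
    specialize (Hint HV _ (fun i => meets g n U i j) (Rmin (g x) (g y)) (Rmax (g x) (g y)) eq_refl).
    assert (Rabs (g x - g y) = Rmax (g x) (g y) - Rmin (g x) (g y)).
    { unfold Rmax, Rmin, Rabs; destruct Rle_dec, Rcase_abs; lra. }
    rewrite H. unfold Rdiv. apply Hint.
    intros z Hz. destruct (cont01_ivt g x y z Hg Ix Iy Hz) as [w [Hw Hgw]].
    assert (Cw : col n j w).
    { unfold col in *. unfold Rmin, Rmax in Hw. destruct Rle_dec.
      - split; [apply Rle_trans with (x * INR n); [lra| apply Rmult_le_compat_r; lra]|
               apply Rle_trans with (y * INR n); [apply Rmult_le_compat_r; lra| lra]].
      - split; [apply Rle_trans with (y * INR n); [lra| apply Rmult_le_compat_r; lra]|
               apply Rle_trans with (x * INR n); [apply Rmult_le_compat_r; lra| lra]]. }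
    pose proof (col_in n j w Hn Hj Cw) as Iw.
    destruct (Hcov (w, g w)) as [i [Hi Ui]]; [split; simpl; auto|].
    exists i. split; auto. split.
    + exists w; auto.
    + split; auto. exists w; auto.
Qed.

Lemma graph_cover u n (Rj : nat -> R) (kk : nat -> nat) : (1 <= n)%nat ->
  (forall j x, (j < n)%nat -> 0 <= x <= 1 -> col n j x -> Rabs (u x - u (INR j / INR n)) <= Rj j) ->
  (forall j, (j < n)%nat -> 2 * Rj j * INR n <= INR (kk j)) ->
  covers_by (graph u) (sqrt 2 / INR n) (nsum (fun j => S (kk j)) n).
Proof.
  intros Hn HR Hk. assert (Hn1 : 1 <= INR n) by (apply (le_INR 1); lia).
  apply covers_family with (Fj := fun j p => INR j / INR n <= fst p <= INR j / INR n + / INR n /\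
      u (INR j / INR n) - Rj j <= snd p <= u (INR j / INR n) - Rj j + INR (kk j) * / INR n).
  - intros j Hj. apply column_cover. apply Rinv_0_lt_compat; lra.
  - intros [x y] [Hx Hy]. simpl in *. subst y.
    destruct (nat_floor n (x * INR n)) as [j [Hj Hj2]]; auto.
    { split; [apply Rmult_le_pos; lra|]. nra. }
    exists j. split; auto.
    assert (Cx : col n j x) by (unfold col; lra).
    specialize (HR j x Hj Hx Cx). specialize (Hk j Hj). apply Rabs_le_between in HR.
    assert (Hinv : 0 < / INR n) by (apply Rinv_0_lt_compat; lra).
    assert (E : INR (kk j) * / INR n >= 2 * Rj j).
    { apply Rle_ge. apply Rmult_le_reg_r with (INR n); [lra|].
      replace (INR (kk j) * / INR n * INR n) with (INR (kk j)) by (field; lra). lra. }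
    split; [|lra].
    destruct Hj2 as [A B]. unfold Rdiv. split.
    + apply Rmult_le_reg_r with (INR n); [lra|]. rewrite Rmult_assoc, Rinv_l by lra. lra.
    + apply Rmult_le_reg_r with (INR n); [lra|]. rewrite Rmult_plus_distr_r, Rmult_assoc, Rinv_l by lra. lra.
Qed.


Lemma sqrt2_bound : 1 <= sqrt 2 <= 3/2.
Proof.
  pose proof (sqrt_sqrt 2 ltac:(lra)). pose proof (sqrt_pos 2). split; nra.
Qed.

Lemma ln_neg_pos d : 0 < d < 1 -> 0 < - ln d.
Proof. intros. assert (ln d < ln 1) by (apply ln_increasing; lra). rewrite ln_1 in H0. lra. Qed.

Lemma dim_ub F D K (n0 : nat) : 0 <= D ->
  (forall n : nat, (n0 <= n)%nat -> (1 <= n)%nat ->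
     exists c, covers_by F (sqrt 2 / INR n) c /\ ln (INR c) <= K + D * ln (INR n)) ->
  Rbar_le (upper_box_dim F) (Finite D).
Proof.
  intros HD H. apply dim_le. intros eps He.
  assert (Hl2 : 0 < ln 2) by (rewrite <- ln_1; apply ln_increasing; lra).
  set (X := (Rabs K + D * ln 2) / eps).
  assert (HX : 0 <= X) by (unfold X; apply Rmult_le_pos; [pose proof (Rabs_pos K); nra| left; apply Rinv_0_lt_compat; lra]).
  pose proof (pos_INR n0).
  exists (Rmin (Rmin (1/2) (/ (INR n0 + 1))) (exp (- X))). split.
  { apply Rmin_pos; [apply Rmin_pos; [lra| apply Rinv_0_lt_compat; lra]| apply exp_pos]. }
  intros d [Hd0 Hde].
  assert (Hd1 : d <= 1/2) by (eapply Rle_trans; [left; apply Hde| eapply Rle_trans; apply Rmin_l]).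
  assert (Hd2 : d <= / (INR n0 + 1)) by (eapply Rle_trans; [left; apply Hde| eapply Rle_trans; [apply Rmin_l| apply Rmin_r]]).
  assert (Hd3 : d <= exp (- X)) by (eapply Rle_trans; [left; apply Hde| apply Rmin_r]).
  pose proof sqrt2_bound as S2.
  destruct (nat_above (sqrt 2 / d)) as [n [Hn1 Hn2]].
  assert (Hsd : 0 < sqrt 2 / d) by (apply Rdiv_lt_0_compat; lra).
  rewrite Rmax_right in Hn2 by lra.
  assert (Hid : / d >= INR n0 + 1).
  { apply Rle_ge. rewrite <- (Rinv_inv (INR n0 + 1)). apply Rinv_le_contravar; [lra|auto]. }
  assert (Hsd2 : sqrt 2 / d >= / d) by (unfold Rdiv; assert (0 < / d) by (apply Rinv_0_lt_compat; lra); nra).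
  assert (Hnn0 : (n0 <= n)%nat) by (apply INR_le; lra).
  assert (Hn1' : (1 <= n)%nat) by (apply (INR_le 1); simpl; lra).
  destruct (H n Hnn0 Hn1') as [c [Hc Hcl]].
  assert (Hcd : covers_by F d c).
  { apply covers_mono with (sqrt 2 / INR n); auto.
    apply Rmult_le_reg_r with (INR n); [lra|]. unfold Rdiv. rewrite Rmult_assoc, Rinv_l by lra.
    apply Rmult_le_reg_l with (/ d); [apply Rinv_0_lt_compat; lra|].
    replace (/ d * (d * INR n)) with (INR n) by (field; lra). lra. }
  destruct (Ncover_spec F d c Hcd) as [k [Hk [Hnc Hmin]]].
  unfold box_ratio. rewrite Hnc. simpl.
  assert (HL := ln_neg_pos d ltac:(lra)).
  assert (HLX : X <= - ln d).
  { assert (ln d <= ln (exp (- X))) by (apply ln_le; lra). rewrite ln_exp in H1. lra. }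
  apply Rmult_le_reg_r with (- ln d); auto. unfold Rdiv. rewrite Rmult_assoc, Rinv_l by lra.
  rewrite Rmult_1_r.
  destruct k.
  - change (INR 0) with 0. rewrite ln_0. nra.
  - specialize (Hmin c Hcd).
    assert (ln (INR (S k)) <= ln (INR c)) by (apply ln_le; [rewrite S_INR; pose proof (pos_INR k); lra| apply le_INR; auto]).
    assert (ln (INR n) <= ln 2 - ln d).
    { rewrite <- ln_div by lra. apply ln_le; [lra|].
      apply Rle_trans with (sqrt 2 / d + 1); [lra|].
      assert (1 <= /d * (1/2)) by (apply Rmult_le_reg_r with d; [lra|]; replace (/ d * (1 / 2) * d) with (1/2) by (field; lra); lra).
      unfold Rdiv. nra. }
    assert (eps * X = Rabs K + D * ln 2) by (unfold X; field; lra).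
    pose proof (Rle_abs K).
    assert (D * ln (INR n) <= D * (ln 2 - ln d)) by (apply Rmult_le_compat_l; auto).
    nra.
Qed.

Lemma dim_ge1 g : cont01 g -> Rbar_le (Finite 1) (upper_box_dim (graph g)).
Proof.
  intros Hg. apply dim_ge2. intros eps e He He0.
  assert (Hl5 : 0 < ln 5) by (rewrite <- ln_1; apply ln_increasing; lra).
  destruct (nat_above (/ e + exp (ln 5 / eps) + 2)) as [n [Hn _]].
  assert (0 < / e) by (apply Rinv_0_lt_compat; lra).
  pose proof (exp_pos (ln 5 / eps)).
  assert (Hn1 : (1 <= n)%nat) by (apply (INR_le 1); simpl; lra).
  exists (/ INR n). split; [split|split].
  - apply Rinv_0_lt_compat; lra.
  - rewrite <- (Rinv_inv e). apply Rinv_lt_contravar; [apply Rmult_lt_0_compat; lra| lra].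
  - rewrite <- Rinv_1. apply Rinv_lt_contravar; lra.
  - intros c [U [HU1 HU2]].
    destruct (column_counts g n c U Hn1 Hg HU1 HU2) as [A [B _]].
    assert (Hc5 : INR n <= 5 * INR c) by (replace 5 with (INR 5) by (simpl; lra); rewrite <- mult_INR; apply le_INR; lia).
    rewrite ln_Rinv by lra. rewrite Ropp_involutive.
    assert (ln (INR n) <= ln 5 + ln (INR c)).
    { rewrite <- ln_mult by (try lra; apply (lt_INR 0); pose proof (Nat.le_trans _ _ _ Hn1 (Nat.le_trans _ _ _ B A)); lia).
      apply ln_le; lra. }
    assert (ln (exp (ln 5 / eps)) <= ln (INR n)) by (apply ln_le; lra).
    rewrite ln_exp in H2.
    assert (eps * (ln 5 / eps) = ln 5) by (field; lra). nra.
Qed.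

Lemma dim_lip (u g1 g2 : R -> R) C D : 0 <= D -> 0 <= C -> cont01 g1 -> cont01 g2 ->
  (forall x y, 0 <= x <= 1 -> 0 <= y <= 1 -> Rabs (u x - u y) <= C * (Rabs (g1 x - g1 y) + Rabs (g2 x - g2 y))) ->
  Rbar_le (upper_box_dim (graph g1)) (Finite D) -> Rbar_le (upper_box_dim (graph g2)) (Finite D) ->
  Rbar_le (upper_box_dim (graph u)) (Finite D).
Proof.
  intros HD HC H1 H2 Hu D1 D2. apply Rbar_le_eps. intros eps He.
  destruct (dim_le_inv _ _ D1 eps He) as [e1 [He1 E1]].
  destruct (dim_le_inv _ _ D2 eps He) as [e2 [He2 E2]].
  destruct (nat_above C) as [K [HK _]].
  destruct (nat_above (/ Rmin e1 e2 + 2)) as [n0 [Hn0 _]].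
  assert (Hm : 0 < Rmin e1 e2) by (apply Rmin_pos; auto).
  assert (0 < / Rmin e1 e2) by (apply Rinv_0_lt_compat; lra).
  apply dim_ub with (K := ln (INR (10 * K + 5)) + ln 2) (n0 := n0); [lra|].
  intros n Hnn0 Hn1.
  assert (Hn0n : INR n0 <= INR n) by (apply le_INR; auto).
  assert (Hn2 : 2 < INR n) by lra.
  assert (Hdn : 0 < / INR n < Rmin e1 e2).
  { split. apply Rinv_0_lt_compat; lra. rewrite <- (Rinv_inv (Rmin e1 e2)).
    apply Rinv_lt_contravar; [apply Rmult_lt_0_compat; lra| lra]. }
  assert (Hlnn : 0 < ln (INR n)) by (rewrite <- ln_1; apply ln_increasing; lra).
  assert (Get : forall g, cont01 g -> (forall d, 0 < d < Rmin e1 e2 -> Rbar_le (box_ratio (graph g) d) (Finite (D + eps))) ->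
     exists N U, (forall i, (i < N)%nat -> diam_le (U i) (/ INR n)) /\ (forall p, graph g p -> exists i, (i < N)%nat /\ U i p)
       /\ ln (INR N) <= (D + eps) * ln (INR n)).
  { intros g Hg Eg. specialize (Eg (/ INR n) Hdn). unfold box_ratio in Eg.
    destruct (classic (exists m, covers_by (graph g) (/ INR n) m)) as [[m Hm']|Hno].
    - destruct (Ncover_spec _ _ m Hm') as [k [[U [HU1 HU2]] [Hk _]]]. rewrite Hk in Eg. simpl in Eg.
      exists k, U. split; auto. split; auto. rewrite ln_Rinv, Ropp_involutive in Eg by lra.
      apply Rmult_le_reg_r with (/ ln (INR n)); [apply Rinv_0_lt_compat; lra|].
      rewrite Rmult_assoc, Rinv_r by lra. lra.
    - rewrite Ncover_none in Eg; [simpl in Eg; contradiction|]. intros m Hm'; apply Hno; eauto. }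
  destruct (Get g1 H1) as [N1 [U1 [A1 [B1 L1]]]].
  { intros d Hd. apply E1. split; [lra| eapply Rlt_le_trans; [apply Hd| apply Rmin_l]]. }
  destruct (Get g2 H2) as [N2 [U2 [A2 [B2 L2]]]].
  { intros d Hd. apply E2. split; [lra| eapply Rlt_le_trans; [apply Hd| apply Rmin_r]]. }
  destruct (column_counts g1 n N1 U1 Hn1 H1 A1 B1) as [S1 [T1 O1]].
  destruct (column_counts g2 n N2 U2 Hn1 H2 A2 B2) as [S2 [T2 O2]].
  set (c1 := fun j => count N1 (fun i => meets g1 n U1 i j)) in *.
  set (c2 := fun j => count N2 (fun i => meets g2 n U2 i j)) in *.
  exists (nsum (fun j => S (2 * K * c1 j + 2 * K * c2 j)) n). split.
  - apply graph_cover with (Rj := fun j => C * (INR (c1 j) / INR n + INR (c2 j) / INR n)); auto.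
    + intros j x Hj Hx Cx.
      assert (Cj : col n j (INR j / INR n)).
      { unfold col. unfold Rdiv. rewrite Rmult_assoc, Rinv_l by lra. lra. }
      eapply Rle_trans; [apply Hu; auto; apply (col_in n j); auto|].
      apply Rmult_le_compat_l; auto. apply Rplus_le_compat; [apply O1| apply O2]; auto.
    + intros j Hj. rewrite plus_INR, !mult_INR.
      replace (2 * (C * (INR (c1 j) / INR n + INR (c2 j) / INR n)) * INR n) with (2 * C * (INR (c1 j) + INR (c2 j))) by (field; lra).
      simpl INR. pose proof (pos_INR (c1 j)); pose proof (pos_INR (c2 j)). nra.
  - assert (Hcnt : (nsum (fun j => S (2 * K * c1 j + 2 * K * c2 j)) n <= (10 * K + 5) * (N1 + N2))%nat).
    { replace (nsum (fun j => S (2 * K * c1 j + 2 * K * c2 j)) n) with (nsum (fun j => 2 * K * c1 j + 2 * K * c2 j + 1)%nat n)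
        by (apply nsum_ext; intros; lia).
      rewrite nsum_lin. nia. }
    assert (HN1 : (1 <= N1)%nat) by lia. assert (HN2 : (1 <= N2)%nat) by lia.
    apply le_INR in Hcnt. rewrite mult_INR, (plus_INR N1 N2) in Hcnt.
    assert (Hc0 : (1 <= nsum (fun j => S (2 * K * c1 j + 2 * K * c2 j)) n)%nat).
    { apply Nat.le_trans with n; auto. apply Nat.le_trans with (nsum (fun _ => 1%nat) n); [rewrite nsum_const; lia|].
      apply nsum_le; intros; lia. }
    apply (le_INR 1) in Hc0. apply (le_INR 1) in HN1. apply (le_INR 1) in HN2. change (INR 1) with 1 in Hc0, HN1, HN2.
    assert (H10 : 1 <= INR (10 * K + 5)) by (apply (le_INR 1); lia).
    eapply Rle_trans. apply ln_le; [lra| apply Hcnt].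
    rewrite ln_mult by lra.
    destruct (Rle_dec (INR N1) (INR N2)).
    + assert (ln (INR N1 + INR N2) <= ln 2 + ln (INR N2)) by (rewrite <- ln_mult by lra; apply ln_le; lra). lra.
    + assert (ln (INR N1 + INR N2) <= ln 2 + ln (INR N1)) by (rewrite <- ln_mult by lra; apply ln_le; lra). lra.
Qed.


Definition T (x : R) : R := Rmin (x - IZR (up x - 1)) (IZR (up x) - x).

Lemma T_spec x : (forall z, T x <= Rabs (x - IZR z)) /\ (exists z, T x = Rabs (x - IZR z)).
Proof.
  destruct (archimed x) as [H1 H2]. unfold T. rewrite minus_IZR. split.
  - intros z. destruct (Z_le_gt_dec z (up x - 1)) as [Hz|Hz].
    + apply IZR_le in Hz. rewrite minus_IZR in Hz. rewrite Rabs_pos_eq by lra.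
      eapply Rle_trans; [apply Rmin_l|]. lra.
    + assert (up x <= z)%Z by lia. apply IZR_le in H. rewrite Rabs_left1 by lra.
      eapply Rle_trans; [apply Rmin_r|]. lra.
  - unfold Rmin. destruct Rle_dec.
    + exists (up x - 1)%Z. rewrite minus_IZR, Rabs_pos_eq by lra. reflexivity.
    + exists (up x). rewrite Rabs_left1 by lra. lra.
Qed.

Lemma T_range x : 0 <= T x <= 1/2.
Proof.
  destruct (archimed x) as [H1 H2]. unfold T. rewrite minus_IZR.
  unfold Rmin; destruct Rle_dec; lra.
Qed.

Lemma T_lip x y : Rabs (T x - T y) <= Rabs (x - y).
Proof.
  destruct (T_spec x) as [Ax [zx Bx]]. destruct (T_spec y) as [Ay [zy By]].
  specialize (Ax zy). specialize (Ay zx).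
  apply Rabs_le. split.
  - rewrite By. pose proof (Rabs_triang (x - IZR zy) (y - x)). replace (x - IZR zy + (y - x)) with (y - IZR zy) in H by ring.
    rewrite Rabs_minus_sym in H. pose proof (Rabs_pos (x-y)). unfold Rabs in *. repeat destruct Rcase_abs; lra.
  - rewrite Bx. pose proof (Rabs_triang (y - IZR zx) (x - y)). replace (y - IZR zx + (x - y)) with (x - IZR zx) in H by ring.
    unfold Rabs in *. repeat destruct Rcase_abs; lra.
Qed.

Lemma T_int z : T (IZR z) = 0.
Proof.
  destruct (T_spec (IZR z)) as [A _]. specialize (A z). rewrite Rminus_diag, Rabs_R0 in A.
  pose proof (T_range (IZR z)). lra.
Qed.

Lemma T_nat q : T (INR q) = 0.
Proof. rewrite INR_IZR_INZ. apply T_int. Qed.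

Lemma T_half q : T (INR q + 1/2) = 1/2.
Proof.
  pose proof (T_range (INR q + 1/2)) as Hr. destruct (T_spec (INR q + 1/2)) as [_ [z Hz]].
  rewrite Hz in *. pose proof (INR_IZR_INZ q) as Eq.
  destruct (Z_le_gt_dec z (Z.of_nat q)) as [Hq|Hq].
  - apply IZR_le in Hq. rewrite Rabs_pos_eq in * by lra. lra.
  - assert (Z.of_nat q + 1 <= z)%Z by lia. apply IZR_le in H. rewrite plus_IZR in H.
    rewrite Rabs_left1 in * by lra. lra.
Qed.

Definition sg (b : R) := exp ((b - 2) * ln 2).
Definition th (b : R) := exp ((b - 1) * ln 2).
Definition pp (b : R) : nat := Z.to_nat (up (2 / (b - 1))).
Definition nk (b : R) (k : nat) : nat := (pp b * (k * k + k))%nat.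
Definition mm (b : R) (k : nat) : R := 2 ^ (nk b k).
Definition aa (b : R) (k : nat) : R := (1/2) ^ k * sg b ^ (nk b k).
Definition LL (b : R) (k : nat) : R := sum_f_R0 (fun i => aa b i * mm b i) k.
Definition term (b x : R) (k : nat) : R := aa b k * T (mm b k * x).
Definition phi (b : R) (x : R) : R := Series (term b x).

Lemma exp_pow a N : exp a ^ N = exp (INR N * a).
Proof.
  induction N. simpl. rewrite Rmult_0_l, exp_0; auto.
  simpl pow. rewrite IHN, S_INR, <- exp_plus. f_equal. ring.
Qed.

Lemma ln2_pos : 0 < ln 2.
Proof. rewrite <- ln_1; apply ln_increasing; lra. Qed.


Lemma pp_spec b : 1 < b <= 2 -> (1 <= pp b)%nat /\ 2 <= INR (pp b) * (b - 1).
Proof.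
  intros Hb. unfold pp. destruct (archimed (2 / (b - 1))) as [H1 H2].
  assert (2 <= 2 / (b - 1)).
  { apply Rmult_le_reg_r with (b - 1); [lra|]. unfold Rdiv. rewrite Rmult_assoc, Rinv_l by lra. nra. }
  assert (0 < up (2 / (b - 1)))%Z by (apply lt_IZR; lra).
  rewrite INR_IZR_INZ, Z2Nat.id by lia. split.
  - assert (1 <= up (2 / (b-1)))%Z by lia. lia.
  - assert (2 / (b - 1) * (b - 1) = 2) by (field; lra). nra.
Qed.

Lemma sg_range b : 1 < b <= 2 -> 0 < sg b <= 1.
Proof.
  intros Hb. unfold sg. split; [apply exp_pos|]. rewrite <- exp_0. 
  destruct (Req_dec b 2). subst. replace ((2-2) * ln 2) with 0 by ring. lra.
  left. apply exp_increasing. pose proof ln2_pos. nra.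
Qed.

Lemma th_eq b : th b = 2 * sg b.
Proof. unfold th, sg. rewrite <- (exp_ln 2) at 2 by lra. rewrite <- exp_plus. f_equal. ring. Qed.

Lemma th_ge1 b : 1 < b <= 2 -> 1 <= th b.
Proof. intros Hb. unfold th. apply Rle_trans with (exp 0); [rewrite exp_0; lra|]. left. apply exp_increasing. pose proof ln2_pos. nra. Qed.

Lemma th_pp b : 1 < b <= 2 -> 4 <= th b ^ pp b.
Proof.
  intros Hb. destruct (pp_spec b Hb) as [_ H]. unfold th. rewrite exp_pow.
  replace 4 with (exp (ln 2) ^ 2) by (rewrite exp_ln by lra; ring). rewrite exp_pow.
  replace (INR 2) with 2 by (simpl; ring).
  pose proof ln2_pos. destruct (Req_dec (INR (pp b) * ((b - 1) * ln 2)) (2 * ln 2)) as [E|E]; [rewrite E; lra|].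
  left. apply exp_increasing. nra.
Qed.

Lemma pow_le_one s n : 0 <= s <= 1 -> s ^ n <= 1.
Proof. intros Hs. induction n; simpl; [lra|]. pose proof (pow_le s n (proj1 Hs)). nra. Qed.

Lemma pow_le_dec s N M : 0 < s <= 1 -> (N <= M)%nat -> s ^ M <= s ^ N.
Proof.
  intros Hs HNM. replace M with (N + (M - N))%nat by lia. rewrite pow_add.
  pose proof (pow_lt _ N (proj1 Hs)). assert (s ^ (M - N) <= 1) by (apply pow_le_one; lra). nra.
Qed.

Lemma pow_le_inc s N M : 1 <= s -> (N <= M)%nat -> s ^ N <= s ^ M.
Proof. intros Hs HNM. apply Rle_pow; auto. Qed.

Lemma nk_S b k : nk b (S k) = (nk b k + pp b * (2 * k + 2))%nat.
Proof. unfold nk. nia. Qed.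

Lemma nk_ge b k : 1 < b <= 2 -> (k <= nk b k)%nat /\ (k * k <= nk b k)%nat.
Proof. intros Hb. destruct (pp_spec b Hb) as [H _]. unfold nk. nia. Qed.

Lemma nk_mono b k l : (k <= l)%nat -> (nk b k <= nk b l)%nat.
Proof. intros H. unfold nk. apply Nat.mul_le_mono_l. nia. Qed.

Lemma mm_pos b k : 0 < mm b k.
Proof. unfold mm. apply pow_lt; lra. Qed.

Lemma pow2_ge k : INR k + 1 <= 2 ^ k.
Proof. induction k. simpl; lra. rewrite S_INR. simpl. pose proof (pos_INR k). lra. Qed.

Lemma mm_ge b k : 1 < b <= 2 -> INR k + 1 <= mm b k.
Proof.
  intros Hb. unfold mm. eapply Rle_trans; [apply pow2_ge|]. apply pow_le_inc; [lra|]. apply nk_ge; auto.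
Qed.

Lemma mm_mono b k l : (k <= l)%nat -> mm b k <= mm b l.
Proof. intros. unfold mm. apply pow_le_inc; [lra|]. apply nk_mono; auto. Qed.

Lemma ln_mm b k : ln (mm b k) = INR (nk b k) * ln 2.
Proof. unfold mm. apply ln_pow. lra. Qed.

Lemma aa_pos b k : 1 < b <= 2 -> 0 < aa b k.
Proof. intros Hb. unfold aa. pose proof (sg_range b Hb). apply Rmult_lt_0_compat; apply pow_lt; lra. Qed.

Lemma aa_le b k : 1 < b <= 2 -> aa b k <= (1/2) ^ k.
Proof.
  intros Hb. unfold aa. pose proof (sg_range b Hb). pose proof (pow_lt (1/2) k ltac:(lra)).
  assert (sg b ^ nk b k <= 1) by (apply pow_le_one; lra). pose proof (pow_lt (sg b) (nk b k) ltac:(lra)). nra.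
Qed.

Lemma aa_shift b k i : 1 < b <= 2 -> aa b (k + i) <= aa b k * (1/2) ^ i.
Proof.
  intros Hb. unfold aa. rewrite pow_add. pose proof (sg_range b Hb).
  assert (sg b ^ nk b (k + i) <= sg b ^ nk b k) by (apply pow_le_dec; auto; apply nk_mono; lia).
  pose proof (pow_lt (1/2) k ltac:(lra)). pose proof (pow_lt (1/2) i ltac:(lra)).
  pose proof (pow_lt (sg b) (nk b (k+i)) ltac:(lra)). 
  replace ((1/2)^k * sg b ^ nk b k * (1/2)^i) with ((1/2)^k * (1/2)^i * sg b ^ nk b k) by ring.
  apply Rmult_le_compat_l; auto. apply Rmult_le_pos; lra.
Qed.

Lemma aa_mm b k : aa b k * mm b k = (1/2) ^ k * th b ^ nk b k.
Proof. unfold aa, mm. rewrite th_eq, Rpow_mult_distr. ring. Qed.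

Lemma th_growth b k : 1 < b <= 2 -> 16 ^ (S k) * th b ^ nk b k <= th b ^ nk b (S k).
Proof.
  intros Hb. rewrite nk_S, pow_add. pose proof (th_ge1 b Hb). pose proof (th_pp b Hb).
  pose proof (pow_lt (th b) (nk b k) ltac:(lra)).
  rewrite Rmult_comm. apply Rmult_le_compat_l; [lra|].
  replace (pp b * (2 * k + 2))%nat with (pp b * (2 * S k))%nat by lia.
  rewrite pow_mult. replace 16 with (4 ^ 2) by ring. rewrite <- pow_mult.
  apply pow_incr. split; lra.
Qed.

Lemma LL_bound b k : 1 < b <= 2 -> LL b k <= 2 * th b ^ nk b k.
Proof.
  intros Hb. pose proof (th_ge1 b Hb). induction k.
  - unfold LL. simpl. rewrite aa_mm. simpl. unfold nk. simpl. rewrite Nat.mul_0_r. simpl. lra.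
  - unfold LL in *. simpl. rewrite aa_mm. pose proof (th_growth b k Hb).
    assert (16 <= 16 ^ S k) by (rewrite <- (pow_1 16) at 1; apply Rle_pow; [lra|lia]).
    pose proof (pow_lt (th b) (nk b k) ltac:(lra)).
    assert ((1/2)^S k <= 1) by (apply pow_le_one; lra). pose proof (pow_lt (1/2) (S k) ltac:(lra)).
    pose proof (pow_lt (th b) (nk b (S k)) ltac:(lra)).
    assert ((1/2)^S k * th b ^ nk b (S k) <= th b ^ nk b (S k)) by nra.
    nra.
Qed.

Lemma term_range b x k : 1 < b <= 2 -> 0 <= term b x k <= aa b k / 2.
Proof.
  intros Hb. unfold term. pose proof (T_range (mm b k * x)). pose proof (aa_pos b k Hb). split; nra.
Qed.

Lemma ex_term_shift b x k : 1 < b <= 2 -> ex_series (fun i => term b x (k + i)).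
Proof.
  intros Hb. apply (ex_series_le (fun i => term b x (k + i)) (fun n => (1/2)^n)).
  - intros n. change (norm (term b x (k + n))) with (Rabs (term b x (k + n))).
    pose proof (term_range b x (k+n) Hb). rewrite Rabs_pos_eq by lra.
    pose proof (aa_le b (k+n) Hb). rewrite pow_add in H0.
    assert ((1/2)^k <= 1) by (apply pow_le_one; lra). pose proof (pow_lt (1/2) n ltac:(lra)).
    pose proof (pow_lt (1/2) k ltac:(lra)). nra.
  - exists (/ (1 - 1/2)). apply is_series_geom. rewrite Rabs_pos_eq; lra.
Qed.

Lemma ex_term b x : 1 < b <= 2 -> ex_series (term b x).
Proof. intros Hb. apply (ex_series_ext (fun i => term b x (0 + i))); [intros; reflexivity|]. apply ex_term_shift; auto. Qed.

Lemma phi_split b x k : 1 < b <= 2 ->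
  phi b x = sum_f_R0 (term b x) k + Series (fun i => term b x (S k + i)).
Proof. intros Hb. unfold phi. rewrite (Series_incr_n _ (S k)); [reflexivity|lia|apply ex_term; auto]. Qed.

Lemma Series_geom_half : Series (fun n => (1/2)^n) = 2.
Proof. apply is_series_unique. assert (H : Rabs (1/2) < 1) by (rewrite Rabs_pos_eq; lra).
  pose proof (is_series_geom (1/2) H) as H0. replace (/ (1 - 1/2)) with 2 in H0 by field. exact H0. Qed.

Lemma tail_range b x k : 1 < b <= 2 -> 0 <= Series (fun i => term b x (S k + i)) <= aa b (S k).
Proof.
  intros Hb. split.
  - rewrite <- (Rmult_0_l (Series (fun n => (1/2)^n))). rewrite <- Series_scal_l.
    apply Series_le; [intros n; split; [lra|]; rewrite Rmult_0_l; apply term_range; auto|].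
    apply ex_term_shift; auto.
  - replace (aa b (S k)) with (aa b (S k) / 2 * Series (fun n => (1/2)^n)) by (rewrite Series_geom_half; field).
    rewrite <- Series_scal_l. apply Series_le.
    + intros n. pose proof (term_range b x (S k + n) Hb). split; [lra|].
      pose proof (aa_shift b (S k) n Hb). lra.
    + apply (ex_series_scal_l (aa b (S k) / 2) (fun n => (1/2)^n)). exists (/ (1 - 1/2)). apply is_series_geom. rewrite Rabs_pos_eq; lra.
Qed.

Lemma partial_lip b x y k : 1 < b <= 2 ->
  Rabs (sum_f_R0 (term b x) k - sum_f_R0 (term b y) k) <= LL b k * Rabs (x - y).
Proof.
  intros Hb. unfold LL. induction k.
  - simpl. unfold term. rewrite <- Rmult_minus_distr_l, Rabs_mult, Rabs_pos_eq by (left; apply aa_pos; auto).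
    rewrite Rmult_assoc. apply Rmult_le_compat_l; [left; apply aa_pos; auto|].
    eapply Rle_trans; [apply T_lip|]. rewrite <- Rmult_minus_distr_l, Rabs_mult, Rabs_pos_eq by (left; apply mm_pos). lra.
  - simpl. replace (sum_f_R0 (term b x) k + term b x (S k) - (sum_f_R0 (term b y) k + term b y (S k)))
      with ((sum_f_R0 (term b x) k - sum_f_R0 (term b y) k) + (term b x (S k) - term b y (S k))) by ring.
    eapply Rle_trans; [apply Rabs_triang|]. rewrite Rmult_plus_distr_r. apply Rplus_le_compat; auto.
    unfold term. rewrite <- Rmult_minus_distr_l, Rabs_mult, Rabs_pos_eq by (left; apply aa_pos; auto).
    rewrite Rmult_assoc. apply Rmult_le_compat_l; [left; apply aa_pos; auto|].
    eapply Rle_trans; [apply T_lip|]. rewrite <- Rmult_minus_distr_l, Rabs_mult, Rabs_pos_eq by (left; apply mm_pos). lra.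
Qed.

Lemma phi_osc b x y k : 1 < b <= 2 -> Rabs (phi b x - phi b y) <= LL b k * Rabs (x - y) + aa b (S k).
Proof.
  intros Hb. rewrite (phi_split b x k), (phi_split b y k) by auto.
  pose proof (partial_lip b x y k Hb). pose proof (tail_range b x k Hb). pose proof (tail_range b y k Hb).
  apply Rabs_le_between in H. apply Rabs_le. lra.
Qed.

Lemma phi_range b x : 1 < b <= 2 -> 0 <= phi b x <= 1.
Proof.
  intros Hb. rewrite (phi_split b x 0) by auto. simpl. pose proof (term_range b x 0 Hb).
  pose proof (tail_range b x 0 Hb). pose proof (aa_le b 0 Hb). pose proof (aa_le b 1 Hb). simpl in *. lra.
Qed.

Lemma half_pow k : (1/2) ^ k <= / (INR k + 1).
Proof.
  replace (1/2) with (/ 2) by field. rewrite pow_inv. apply Rinv_le_contravar.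
  pose proof (pos_INR k); lra. apply pow2_ge.
Qed.

Lemma phi_cont b : 1 < b <= 2 -> cont01 (phi b).
Proof.
  intros Hb x _ eps He.
  destruct (nat_above (4 / eps)) as [k [Hk _]].
  assert (Ha : aa b (S k) < eps / 2).
  { eapply Rle_lt_trans; [apply aa_le; auto|]. eapply Rle_lt_trans; [apply half_pow|].
    rewrite S_INR. pose proof (pos_INR k).
    apply Rmult_lt_reg_r with ((INR k + 1 + 1) * (2 / eps)).
    apply Rmult_lt_0_compat; [lra|apply Rdiv_lt_0_compat; lra].
    replace (/ (INR k + 1 + 1) * ((INR k + 1 + 1) * (2 / eps))) with (2 / eps) by (field; lra).
    replace (eps / 2 * ((INR k + 1 + 1) * (2 / eps))) with (INR k + 1 + 1) by (field; lra).
    assert (2 / eps < 4 / eps) by (unfold Rdiv; apply Rmult_lt_compat_r; [apply Rinv_0_lt_compat|]; lra). lra. }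
  pose proof (LL_bound b k Hb). 
  assert (HL : 0 <= LL b k).
  { unfold LL. apply cond_pos_sum. intros i. rewrite aa_mm. apply Rmult_le_pos; apply pow_le; [lra|]. pose proof (th_ge1 b Hb); lra. }
  exists (eps / (2 * (LL b k + 1))). split; [apply Rdiv_lt_0_compat; lra|].
  intros y _ Hy. rewrite Rabs_minus_sym in Hy. pose proof (phi_osc b x y k Hb).
  rewrite Rabs_minus_sym in H0. 
  assert (LL b k * Rabs (x - y) <= LL b k * (eps / (2 * (LL b k + 1)))) by (apply Rmult_le_compat_l; lra).
  assert (LL b k * (eps / (2 * (LL b k + 1))) < eps / 2).
  { apply Rmult_lt_reg_r with (2 * (LL b k + 1)); [lra|].
    replace (LL b k * (eps / (2 * (LL b k + 1))) * (2 * (LL b k + 1))) with (LL b k * eps) by (field; lra). nra. }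
  lra.
Qed.


Lemma Series_zero a : (forall n, a n = 0) -> Series a = 0.
Proof.
  intros H. rewrite (Series_ext a (fun n => 0 * (1/2)^n)) by (intros; rewrite H; ring).
  rewrite Series_scal_l. ring.
Qed.

Lemma mm_ratio b i k : (k <= i)%nat -> mm b i = 2 ^ (nk b i - nk b k) * mm b k.
Proof.
  intros H. unfold mm. rewrite <- pow_add. f_equal. pose proof (nk_mono b k i H). lia.
Qed.

Lemma INR_pow2 d : INR (2 ^ d) = 2 ^ d.
Proof. rewrite pow_INR. reflexivity. Qed.

Lemma phi_jump b k j : 1 < b <= 2 -> (1 <= k)%nat ->
  phi b ((INR j + 1/2) / mm b k) - phi b (INR j / mm b k) >= aa b k / 4.
Proof.
  intros Hb Hk. destruct k as [|k']; [lia|]. set (k := S k').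
  pose proof (mm_pos b k) as Hm.
  set (x1 := INR j / mm b k). set (x2 := (INR j + 1/2) / mm b k).
  assert (Z1 : forall i, (k <= i)%nat -> T (mm b i * x1) = 0).
  { intros i Hi. rewrite (mm_ratio b i k Hi). unfold x1.
    replace (2 ^ (nk b i - nk b k) * mm b k * (INR j / mm b k)) with (INR (2 ^ (nk b i - nk b k) * j))
      by (rewrite mult_INR, INR_pow2; field; lra). apply T_nat. }
  assert (Z2 : forall i, (k < i)%nat -> T (mm b i * x2) = 0).
  { intros i Hi. rewrite (mm_ratio b i k ltac:(lia)). unfold x2.
    assert (Hd : (1 <= nk b i - nk b k)%nat).
    { pose proof (nk_mono b (S k) i Hi). rewrite nk_S in H. destruct (pp_spec b Hb). nia. }
    replace (nk b i - nk b k)%nat with (S (nk b i - nk b k - 1)) by lia.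
    replace (2 ^ S (nk b i - nk b k - 1) * mm b k * ((INR j + 1 / 2) / mm b k))
      with (INR (2 ^ (nk b i - nk b k - 1) * (2 * j + 1))) by (rewrite mult_INR, INR_pow2, plus_INR, mult_INR; simpl; field; lra).
    apply T_nat. }
  rewrite (phi_split b x1 k Hb), (phi_split b x2 k Hb).
  rewrite (Series_zero (fun i => term b x1 (S k + i))) by (intros; unfold term; rewrite Z1 by lia; ring).
  rewrite (Series_zero (fun i => term b x2 (S k + i))) by (intros; unfold term; rewrite Z2 by lia; ring).
  unfold k. simpl sum_f_R0. fold k.
  assert (E1 : term b x1 k = 0) by (unfold term; rewrite Z1 by lia; ring).
  assert (E2 : term b x2 k = aa b k / 2).
  { unfold term, x2. replace (mm b k * ((INR j + 1 / 2) / mm b k)) with (INR j + 1/2) by (field; lra).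
    rewrite T_half. field. }
  rewrite E1, E2.
  pose proof (partial_lip b x2 x1 k' Hb) as HP.
  assert (Hx : Rabs (x2 - x1) = / (2 * mm b k)).
  { unfold x1, x2. replace ((INR j + 1 / 2) / mm b k - INR j / mm b k) with (/ (2 * mm b k)) by (field; lra).
    rewrite Rabs_pos_eq; [auto| left; apply Rinv_0_lt_compat; lra]. }
  rewrite Hx in HP. apply Rabs_le_between in HP.
  pose proof (LL_bound b k' Hb).
  pose proof (th_growth b k' Hb). pose proof (aa_mm b k) as AM.
  assert (H8 : 8 <= (1/2) ^ k * 16 ^ k).
  { rewrite <- Rpow_mult_distr. replace (1/2 * 16) with 8 by field. unfold k. simpl.
    assert (1 <= 8 ^ k') by (apply pow_R1_Rle; lra). lra. }
  pose proof (pow_lt (th b) (nk b k') ltac:(pose proof (th_ge1 b Hb); lra)).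
  pose proof (pow_lt (1/2) k ltac:(lra)).
  assert (Hkey : 8 * th b ^ nk b k' <= aa b k * mm b k).
  { rewrite AM. unfold k in *. 
    apply Rle_trans with ((1/2)^(S k') * 16 ^ (S k') * th b ^ nk b k'); [nra|].
    rewrite Rmult_assoc. apply Rmult_le_compat_l; lra. }
  assert (LL b k' * / (2 * mm b k) <= aa b k / 8).
  { apply Rmult_le_reg_r with (2 * mm b k); [lra|].
    replace (LL b k' * / (2 * mm b k) * (2 * mm b k)) with (LL b k') by (field; lra).
    unfold k in *. nra. }
  unfold k in *. lra.
Qed.

Lemma nsum_real_lb f n r : (forall j, (j < n)%nat -> r <= INR (f j)) -> INR n * r <= INR (nsum f n).
Proof.
  induction n; intros H; simpl nsum. simpl; lra.
  rewrite plus_INR, S_INR. specialize (IHn (fun j Hj => H j ltac:(lia))). specialize (H n ltac:(lia)). lra.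
Qed.

Lemma ln_sg b : ln (sg b) = (b - 2) * ln 2.
Proof. unfold sg. apply ln_exp. Qed.

Lemma phi_dim_ge b : 1 < b <= 2 -> Rbar_le (Finite b) (upper_box_dim (graph (phi b))).
Proof.
  intros Hb. apply dim_ge2. intros eps e He He0.
  pose proof ln2_pos as L2.
  destruct (nat_above (5 + 2 / eps + / e)) as [k [Hk _]].
  assert (0 < 2 / eps) by (apply Rdiv_lt_0_compat; lra).
  assert (0 < / e) by (apply Rinv_0_lt_compat; lra).
  assert (Hk1 : (1 <= k)%nat) by (apply (INR_le 1); simpl; lra).
  pose proof (mm_ge b k Hb) as Hmk. pose proof (mm_pos b k) as Hmp.
  set (M := (2 ^ nk b k)%nat).
  assert (HM : INR M = mm b k) by (unfold M, mm; apply INR_pow2).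
  assert (HM1 : (1 <= M)%nat) by (apply (INR_le 1); simpl; lra).
  exists (/ INR M). rewrite HM. split; [split|split].
  - apply Rinv_0_lt_compat; lra.
  - rewrite <- (Rinv_inv e). apply Rinv_lt_contravar; [apply Rmult_lt_0_compat; lra| lra].
  - rewrite <- Rinv_1. apply Rinv_lt_contravar; lra.
  - intros c [U [HU1 HU2]]. rewrite <- HM in HU1.
    destruct (column_counts (phi b) M c U HM1 (phi_cont b Hb) HU1 HU2) as [S5 [_ O]].
    set (cj := fun j => count c (fun i => meets (phi b) M U i j)) in *.
    assert (Hcj : forall j, (j < M)%nat -> INR M * aa b k / 4 <= INR (cj j)).
    { intros j Hj. specialize (O j ((INR j + 1/2) / mm b k) (INR j / mm b k) Hj).
      rewrite <- HM in O. pose proof (phi_jump b k j Hb Hk1). rewrite <- HM in H1.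
      assert (Rabs (phi b ((INR j + 1 / 2) / INR M) - phi b (INR j / INR M)) <= INR (cj j) / INR M).
      { apply O; unfold col.
        - replace ((INR j + 1 / 2) / INR M * INR M) with (INR j + 1/2) by (field; lra). lra.
        - replace (INR j / INR M * INR M) with (INR j) by (field; lra). lra. }
      pose proof (aa_pos b k Hb). rewrite Rabs_pos_eq in H2 by lra.
      apply Rmult_le_reg_r with (/ INR M); [apply Rinv_0_lt_compat; lra|].
      replace (INR M * aa b k / 4 * / INR M) with (aa b k / 4) by (field; lra). lra. }
    pose proof (nsum_real_lb cj M _ Hcj) as Hsum.
    apply le_INR in S5. rewrite mult_INR in S5. simpl INR in S5.
    pose proof (aa_pos b k Hb) as Ha.
    assert (Hc : INR M * INR M * aa b k / 20 <= INR c) by lra.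
    assert (Hpos : 0 < INR M * INR M * aa b k / 20) by (apply Rdiv_lt_0_compat; [apply Rmult_lt_0_compat; [nra|lra]|lra]).
    apply ln_le in Hc; auto.
    unfold Rdiv in Hc. rewrite !ln_mult in Hc by (try apply Rinv_0_lt_compat; nra).
    rewrite ln_Rinv in Hc by lra. rewrite ln_Rinv, Ropp_involutive by lra.
    rewrite HM, ln_mm in Hc. rewrite ln_mm.
    unfold aa in Hc. rewrite ln_mult in Hc by (apply pow_lt; pose proof (sg_range b Hb); lra).
    rewrite !ln_pow in Hc by (try lra; pose proof (sg_range b Hb); lra).
    rewrite ln_sg in Hc. replace (ln (1/2)) with (- ln 2) in Hc by (unfold Rdiv; rewrite Rmult_1_l, ln_Rinv by lra; ring).
    assert (H20 : ln 20 <= 5 * ln 2).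
    { replace (5 * ln 2) with (INR 5 * ln 2) by (simpl; ring). rewrite <- ln_pow by lra. apply ln_le; simpl; lra. }
    destruct (nk_ge b k Hb) as [_ Hkk]. apply le_INR in Hkk. rewrite mult_INR in Hkk.
    assert (Hek : 2 <= eps * INR k).
    { apply Rmult_le_reg_r with (/ eps); [apply Rinv_0_lt_compat; lra|].
      replace (eps * INR k * / eps) with (INR k) by (field; lra). unfold Rdiv in *. lra. }
    assert (eps * INR (nk b k) >= INR k + 5).
    { pose proof (pos_INR k). nra. }
    nra.
Qed.

Lemma find_k b (n : R) : 1 < b <= 2 -> 1 <= n -> exists k, mm b k <= n < mm b (S k).
Proof.
  intros Hb Hn.
  assert (forall K, n < mm b K -> exists k, mm b k <= n < mm b (S k)).
  { induction K; intros HK.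
    - unfold mm, nk in HK. simpl Nat.add in HK. rewrite Nat.mul_0_r in HK. simpl in HK. lra.
    - destruct (Rlt_dec n (mm b K)); auto. exists K; lra. }
  destruct (nat_above n) as [K [HK _]]. apply (H K). pose proof (mm_ge b K Hb). lra.
Qed.

Lemma th_exp b k : th b ^ nk b k = exp ((b - 1) * ln (mm b k)).
Proof. unfold th. rewrite exp_pow, ln_mm. f_equal. ring. Qed.

Lemma sg_exp b k : sg b ^ nk b k = exp ((b - 2) * ln (mm b k)).
Proof. unfold sg. rewrite exp_pow, ln_mm. f_equal. ring. Qed.

Lemma phi_dim_le b : 1 < b <= 2 -> Rbar_le (upper_box_dim (graph (phi b))) (Finite b).
Proof.
  intros Hb. apply dim_ub with (K := ln 8) (n0 := 1%nat); [lra|].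
  intros n _ Hn1. assert (Hn : 1 <= INR n) by (apply (le_INR 1); auto).
  destruct (find_k b (INR n) Hb Hn) as [k [Hk1 Hk2]].
  pose proof (aa_pos b (S k) Hb) as Ha.
  assert (HL : 0 <= LL b k).
  { unfold LL. apply cond_pos_sum. intros i. rewrite aa_mm. apply Rmult_le_pos; apply pow_le; [lra|]. pose proof (th_ge1 b Hb); lra. }
  set (X := 2 * LL b k + 2 * aa b (S k) * INR n).
  destruct (nat_above X) as [kk [Hkk1 Hkk2]]. rewrite Rmax_right in Hkk2 by (unfold X; nra).
  exists (nsum (fun _ => S kk) n). split.
  - apply graph_cover with (Rj := fun _ => LL b k / INR n + aa b (S k)); auto.
    + intros j x Hj Hx Cx. eapply Rle_trans; [apply phi_osc with (k := k); auto|].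
      apply Rplus_le_compat_r. unfold Rdiv. apply Rmult_le_compat_l; auto.
      destruct Cx as [C1 C2]. apply Rabs_le.
      split; apply Rmult_le_reg_r with (INR n); try lra;
        replace ((x - INR j * / INR n) * INR n) with (x * INR n - INR j) by (field; lra);
        try rewrite Rinv_l by lra; try (rewrite Ropp_mult_distr_l_reverse, Rinv_l by lra); lra.
    + intros j Hj. replace (2 * (LL b k / INR n + aa b (S k)) * INR n) with X by (unfold X; field; lra). lra.
  - rewrite nsum_const, mult_INR, S_INR. rewrite ln_mult by (pose proof (pos_INR kk); lra).
    set (E := exp ((b - 1) * ln (INR n))).
    assert (Hln : 0 <= ln (INR n)) by (rewrite <- ln_1; apply ln_le; lra).
    assert (HE : 1 <= E) by (unfold E; apply Rle_trans with (exp 0); [rewrite exp_0; lra|]; destruct (Req_dec ((b-1) * ln (INR n)) 0) as [Z|Z];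
       [rewrite Z; lra| left; apply exp_increasing; nra]).
    assert (A1 : LL b k <= 2 * E).
    { eapply Rle_trans; [apply LL_bound; auto|]. rewrite th_exp. apply Rmult_le_compat_l; [lra|].
      destruct (Req_dec (mm b k) (INR n)) as [Z|Z]; [rewrite Z; unfold E; lra|].
      left. apply exp_increasing. assert (ln (mm b k) < ln (INR n)) by (apply ln_increasing; [apply mm_pos|lra]). nra. }
    assert (A2 : aa b (S k) * INR n <= E).
    { unfold aa. assert ((1/2)^S k <= 1) by (apply pow_le_one; lra).
      pose proof (pow_lt (1/2) (S k) ltac:(lra)).
      pose proof (pow_lt (sg b) (nk b (S k)) ltac:(pose proof (sg_range b Hb); lra)).
      apply Rle_trans with (sg b ^ nk b (S k) * INR n).
      { rewrite Rmult_assoc. apply Rle_trans with (1 * (sg b ^ nk b (S k) * INR n)); [|lra].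
        apply Rmult_le_compat_r; [|lra]. apply Rmult_le_pos; lra. }
      rewrite sg_exp. rewrite <- (exp_ln (INR n)) by lra. rewrite <- exp_plus. unfold E.
      assert (ln (INR n) < ln (mm b (S k))) by (apply ln_increasing; lra).
      destruct (Req_dec b 2) as [Z|Z].
      - subst. right. f_equal. ring.
      - left. apply exp_increasing. nra. }
    assert (HX : INR kk + 1 <= 8 * E) by (unfold X in Hkk2; lra).
    assert (ln (INR kk + 1) <= ln 8 + (b - 1) * ln (INR n)).
    { eapply Rle_trans. apply ln_le; [pose proof (pos_INR kk); lra| apply HX].
      rewrite ln_mult by (try lra; unfold E; apply exp_pos). unfold E. rewrite ln_exp. lra. }
    lra.
Qed.

Lemma phi_exists b : 1 < b <= 2 -> exists p : R -> R, cont01 p /\ (forall x, 0 <= p x <= 1) /\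
   upper_box_dim (graph p) = Finite b.
Proof.
  intros Hb. exists (phi b). split; [apply phi_cont; auto|]. split; [intros; apply phi_range; auto|].
  apply Rbar_le_antisym; [apply phi_dim_le | apply phi_dim_ge]; auto.
Qed.


Lemma quot_rel (A B : R -> R) MA mB x y : 0 <= MA -> 0 < mB ->
  (forall x, 0 <= x <= 1 -> Rabs (A x) <= MA) -> (forall x, 0 <= x <= 1 -> mB <= Rabs (B x)) ->
  0 <= x <= 1 -> 0 <= y <= 1 ->
  Rabs (A x / B x - A y / B y) <= (/ mB + MA / (mB * mB)) * (Rabs (A x - A y) + Rabs (B x - B y)).
Proof.
  intros HMA HmB HA HB Hx Hy.
  pose proof (HB x Hx) as Bx. pose proof (HB y Hy) as By. pose proof (HA y Hy) as Ay.
  assert (Bx0 : B x <> 0) by (intro Z; rewrite Z, Rabs_R0 in Bx; lra).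
  assert (By0 : B y <> 0) by (intro Z; rewrite Z, Rabs_R0 in By; lra).
  replace (A x / B x - A y / B y) with ((A x - A y) * / B x + A y * (B y - B x) * / (B x * B y)) by (field; auto).
  eapply Rle_trans; [apply Rabs_triang|]. rewrite !Rabs_mult, !Rabs_inv, Rabs_mult.
  assert (I1 : / Rabs (B x) <= / mB) by (apply Rinv_le_contravar; lra).
  assert (I2 : / (Rabs (B x) * Rabs (B y)) <= / (mB * mB)) by (apply Rinv_le_contravar; [nra| apply Rmult_le_compat; lra]).
  assert (0 <= / Rabs (B x)) by (left; apply Rinv_0_lt_compat; lra).
  assert (0 <= / (Rabs (B x) * Rabs (B y))) by (left; apply Rinv_0_lt_compat; nra).
  pose proof (Rabs_pos (A x - A y)). pose proof (Rabs_pos (B y - B x)). pose proof (Rabs_pos (A y)).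
  rewrite (Rabs_minus_sym (B y)).
  assert (Rabs (A x - A y) * / Rabs (B x) <= Rabs (A x - A y) * / mB) by (apply Rmult_le_compat_l; lra).
  assert (Rabs (A y) * Rabs (B x - B y) * / (Rabs (B x) * Rabs (B y)) <= MA * Rabs (B x - B y) * / (mB * mB)).
  { pose proof (Rabs_pos (B x - B y)). apply Rmult_le_compat; try lra. apply Rmult_le_pos; lra. apply Rmult_le_compat_r; lra. }
  assert (0 <= / mB) by (left; apply Rinv_0_lt_compat; lra).
  assert (0 <= MA / (mB * mB)) by (apply Rmult_le_pos; [lra| left; apply Rinv_0_lt_compat; nra]).
  unfold Rdiv in *. pose proof (Rabs_pos (B x - B y)). assert (0 <= / mB * Rabs (B x - B y)) by (apply Rmult_le_pos; lra). assert (0 <= MA * / (mB * mB) * Rabs (A x - A y)) by (apply Rmult_le_pos; lra). lra.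
Qed.

Lemma lt_pick (x y : Rbar) b : 1 < b -> Rbar_lt x (Finite b) -> Rbar_lt y (Finite b) ->
  exists D, 0 <= D < b /\ Rbar_le x (Finite D) /\ Rbar_le y (Finite D).
Proof.
  intros Hb Hx Hy.
  assert (forall z : Rbar, Rbar_lt z (Finite b) -> exists r, r < b /\ Rbar_le z (Finite r)).
  { intros [r| |] Hz; simpl in Hz; try contradiction.
    - exists r; simpl; split; lra.
    - exists 0; simpl; split; auto; lra. }
  destruct (H x Hx) as [r1 [R1 X1]]. destruct (H y Hy) as [r2 [R2 X2]].
  exists (Rmax 0 (Rmax r1 r2)). split; [split; [apply Rmax_l| unfold Rmax; repeat destruct Rle_dec; lra]|].
  split.
  - eapply Rbar_le_trans; [apply X1|]. simpl. eapply Rle_trans; [apply Rmax_l|apply Rmax_r].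
  - eapply Rbar_le_trans; [apply X2|]. simpl. eapply Rle_trans; [apply Rmax_r|apply Rmax_r].
Qed.

Theorem theorem3p9 (beta : R) (f : R -> R) :
  1 <= beta <= 2 ->
  cont01 f ->
  (forall x, 0 <= x <= 1 -> f x <> 0) ->
  ((exists g h : R -> R,
      cont01 g /\ cont01 h /\
      (forall x, 0 <= x <= 1 -> f x = g x * h x) /\
      upper_box_dim (graph g) = Finite beta /\
      upper_box_dim (graph h) = Finite beta)
   <-> Rbar_le (upper_box_dim (graph f)) (Finite beta)).
Proof.
  intros [Hb1 Hb2] Hf Hnz. split.
  - intros [g [h [Hg [Hh [Hfgh [Dg Dh]]]]]].
    destruct (cont01_bounded g Hg) as [Mg [HMg Bg]]. destruct (cont01_bounded h Hh) as [Mh [HMh Bh]].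
    apply dim_lip with (g1 := g) (g2 := h) (C := Mg + Mh); auto; try lra.
    + intros x y Hx Hy. rewrite (Hfgh x Hx), (Hfgh y Hy).
      replace (g x * h x - g y * h y) with (g x * (h x - h y) + h y * (g x - g y)) by ring.
      eapply Rle_trans; [apply Rabs_triang|]. rewrite !Rabs_mult.
      pose proof (Bg x Hx). pose proof (Bh y Hy). pose proof (Rabs_pos (h x - h y)). pose proof (Rabs_pos (g x - g y)).
      pose proof (Rabs_pos (g x)). pose proof (Rabs_pos (h y)). nra.
    + rewrite Dg; simpl; lra.
    + rewrite Dh; simpl; lra.
  - intros Df.
    destruct (cont01_bounded f Hf) as [Mf [HMf Bf]].
    destruct (cont01_min f Hf Hnz) as [mf [Hmf Mnf]].
    destruct (Req_dec beta 1) as [E1|Ebeta].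
    + subst beta. exists (fun _ => 1), f.
      assert (Hc : cont01 (fun _ : R => 1)).
      { intros x _ eps He. exists 1. split; [lra|]. intros. rewrite Rminus_diag, Rabs_R0; lra. }
      split; auto. split; auto. split; [intros; ring|]. split; apply Rbar_le_antisym; auto; try apply dim_ge1; auto.
      apply dim_lip with (g1 := f) (g2 := f) (C := 0); auto; try lra.
      intros. rewrite Rminus_diag, Rabs_R0. lra.
    + assert (Hb : 1 < beta <= 2) by lra.
      destruct (phi_exists beta Hb) as [p [Hp [Hpr Dp]]].
      set (psi := fun (t : R) (x : R) => 1 + t * p x).
      set (hh := fun (t : R) (x : R) => f x / psi t x).
      assert (Psi_cont : forall t, 1 <= t <= 2 -> cont01 (psi t)).
      { intros t Ht. apply lip_cont with (g1 := p) (g2 := p) (C := t); auto; try lra.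
        intros x y _ _. unfold psi. replace (1 + t * p x - (1 + t * p y)) with (t * (p x - p y)) by ring.
        rewrite Rabs_mult, Rabs_pos_eq by lra. pose proof (Rabs_pos (p x - p y)). nra. }
      assert (Psi_ge : forall t x, 1 <= t <= 2 -> 1 <= Rabs (psi t x)).
      { intros t x Ht. unfold psi. pose proof (Hpr x). rewrite Rabs_pos_eq; nra. }
      assert (Psi_le : forall t x, 1 <= t <= 2 -> psi t x <= 3).
      { intros t x Ht. unfold psi. pose proof (Hpr x). nra. }
      assert (Psi_dim : forall t, 1 <= t <= 2 -> upper_box_dim (graph (psi t)) = Finite beta).
      { intros t Ht. apply Rbar_le_antisym.
        - apply dim_lip with (g1 := p) (g2 := p) (C := t); auto; try lra.
          + intros x y _ _. unfold psi. replace (1 + t * p x - (1 + t * p y)) with (t * (p x - p y)) by ring.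
            rewrite Rabs_mult, Rabs_pos_eq by lra. pose proof (Rabs_pos (p x - p y)). nra.
          + rewrite Dp; simpl; lra.
          + rewrite Dp; simpl; lra.
        - apply NNPP. intros Hn. apply Rbar_not_le_lt in Hn.
          destruct (lt_pick _ _ beta ltac:(lra) Hn Hn) as [D [HD [D1 _]]].
          assert (Rbar_le (upper_box_dim (graph p)) (Finite D)).
          { apply dim_lip with (g1 := psi t) (g2 := psi t) (C := 1); auto; try lra.
            intros x y _ _. unfold psi. replace (1 + t * p x - (1 + t * p y)) with (t * (p x - p y)) by ring.
            rewrite Rabs_mult, (Rabs_pos_eq t) by lra. pose proof (Rabs_pos (p x - p y)). nra. }
          rewrite Dp in H. simpl in H. lra. }
      assert (H_rel : forall t x y, 1 <= t <= 2 -> 0 <= x <= 1 -> 0 <= y <= 1 ->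
          Rabs (hh t x - hh t y) <= (/ 1 + Mf / (1 * 1)) * (Rabs (f x - f y) + Rabs (psi t x - psi t y))).
      { intros t x y Ht Hx Hy. unfold hh. apply quot_rel; auto; lra. }
      assert (C1 : 0 <= / 1 + Mf / (1 * 1)) by (replace (/1 + Mf/(1*1)) with (1 + Mf) by field; lra).
      assert (H_cont : forall t, 1 <= t <= 2 -> cont01 (hh t)).
      { intros t Ht. apply lip_cont with (g1 := f) (g2 := psi t) (C := / 1 + Mf / (1 * 1)); auto. }
      assert (H_le : forall t, 1 <= t <= 2 -> Rbar_le (upper_box_dim (graph (hh t))) (Finite beta)).
      { intros t Ht. apply dim_lip with (g1 := f) (g2 := psi t) (C := / 1 + Mf / (1 * 1)); auto; try lra.
        rewrite Psi_dim; simpl; auto; lra. }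
      assert (Fact : forall t x, 1 <= t <= 2 -> 0 <= x <= 1 -> f x = psi t x * hh t x).
      { intros t x Ht Hx. unfold hh. field. pose proof (Psi_ge t x Ht). intro Z; rewrite Z, Rabs_R0 in H; lra. }
      destruct (classic (Rbar_le (Finite beta) (upper_box_dim (graph (hh 1))))) as [G1|G1].
      { exists (psi 1), (hh 1). split; [apply Psi_cont; lra|]. split; [apply H_cont; lra|].
        split; [intros; apply Fact; auto; lra|]. split; [apply Psi_dim; lra|].
        apply Rbar_le_antisym; auto. apply H_le; lra. }
      destruct (classic (Rbar_le (Finite beta) (upper_box_dim (graph (hh 2))))) as [G2|G2].
      { exists (psi 2), (hh 2). split; [apply Psi_cont; lra|]. split; [apply H_cont; lra|].
        split; [intros; apply Fact; auto; lra|]. split; [apply Psi_dim; lra|].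
        apply Rbar_le_antisym; auto. apply H_le; lra. }
      exfalso. apply Rbar_not_le_lt in G1. apply Rbar_not_le_lt in G2.
      destruct (lt_pick _ _ beta ltac:(lra) G1 G2) as [D [HD [D1 D2]]].
      set (rho := fun x => hh 1 x / hh 2 x).
      assert (Hh2 : forall x, 0 <= x <= 1 -> mf / 3 <= Rabs (hh 2 x)).
      { intros x Hx. unfold hh. unfold Rdiv. rewrite Rabs_mult, Rabs_inv.
        pose proof (Mnf x Hx). pose proof (Psi_ge 2 x ltac:(lra)). pose proof (Psi_le 2 x ltac:(lra)).
        assert (Ep : Rabs (psi 2 x) = psi 2 x) by (apply Rabs_pos_eq; unfold psi; pose proof (Hpr x); lra).
        rewrite Ep in *.
        apply Rle_trans with (mf * / 3); [lra|]. apply Rmult_le_compat; try lra.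
        all: try (apply Rinv_le_contravar; lra). }
      assert (Hh1 : forall x, 0 <= x <= 1 -> Rabs (hh 1 x) <= Mf).
      { intros x Hx. unfold hh. unfold Rdiv. rewrite Rabs_mult, Rabs_inv.
        pose proof (Bf x Hx). pose proof (Psi_ge 1 x ltac:(lra)).
        assert (/ Rabs (psi 1 x) <= 1) by (apply Rle_trans with (/ 1); [apply Rinv_le_contravar; lra| rewrite Rinv_1; lra]).
        assert (0 <= / Rabs (psi 1 x)) by (left; apply Rinv_0_lt_compat; lra).
        pose proof (Rabs_pos (f x)). nra. }
      set (Cr := / (mf / 3) + Mf / (mf / 3 * (mf / 3))).
      assert (HCr : 0 <= Cr).
      { unfold Cr. apply Rplus_le_le_0_compat; [left; apply Rinv_0_lt_compat; lra|].
        apply Rmult_le_pos; [lra| left; apply Rinv_0_lt_compat; nra]. }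
      assert (Rrel : forall x y, 0 <= x <= 1 -> 0 <= y <= 1 ->
         Rabs (rho x - rho y) <= Cr * (Rabs (hh 1 x - hh 1 y) + Rabs (hh 2 x - hh 2 y))).
      { intros x y Hx Hy. apply quot_rel; auto; lra. }
      assert (Rcont : cont01 rho) by (apply lip_cont with (g1 := hh 1) (g2 := hh 2) (C := Cr); auto; apply H_cont; lra).
      assert (Rdim : Rbar_le (upper_box_dim (graph rho)) (Finite D)).
      { apply dim_lip with (g1 := hh 1) (g2 := hh 2) (C := Cr); auto; try lra; apply H_cont; lra. }
      assert (Rho_eq : forall x, 0 <= x <= 1 -> rho x = (1 + 2 * p x) / (1 + p x)).
      { intros x Hx. unfold rho, hh, psi. pose proof (Hpr x). pose proof (Hnz x Hx). field. repeat split; lra. }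
      assert (Pdim : Rbar_le (upper_box_dim (graph p)) (Finite D)).
      { apply dim_lip with (g1 := rho) (g2 := rho) (C := 2); auto; try lra.
        intros x y Hx Hy. rewrite (Rho_eq x Hx), (Rho_eq y Hy). pose proof (Hpr x). pose proof (Hpr y).
        replace ((1 + 2 * p x) / (1 + p x) - (1 + 2 * p y) / (1 + p y)) with ((p x - p y) / ((1 + p x) * (1 + p y))) by (field; lra).
        replace (p x - p y) with ((p x - p y) / ((1 + p x) * (1 + p y)) * ((1 + p x) * (1 + p y))) at 1 by (field; lra).
        rewrite Rabs_mult. rewrite (Rabs_pos_eq ((1 + p x) * (1 + p y))) by nra.
        pose proof (Rabs_pos ((p x - p y) / ((1 + p x) * (1 + p y)))).
        assert ((1 + p x) * (1 + p y) <= 4) by nra. nra. }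
      rewrite Dp in Pdim. simpl in Pdim. lra.
Qed.
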